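(* Let $a_1,\dots,a_k$ be positive integers with $\gcd(a_1,\dots,a_k)=1$, let $\mathit{NR}$ be the finite set of positive integers that are not representable, let $a$ be one of the $a_i$, let $\mathcal{N}$ be the set of positive integers $n$ such that $n$ is representable and $n-a$ is not, and let $\mathcal{N}_0=\mathcal{N}\cup\{0\}$. Then for all complex $z\neq 0$ with $e^{az}\neq1$, \[ \sum_{n\in\mathit{NR}}e^{nz}=\frac{1}{e^{az}-1}\sum_{n\in\mathcal{N}_0}e^{nz}-\frac{1}{e^z-1}, \] and, writing $S_m=\sum_{n\in\mathit{NR}}n^m$, for every integer $m\ge1$, \[ mS_{m-1}=a^{m-1}\sum_{n\in\mathcal{N}_0}B_m(n/a)-B_m . \]
   Context: An integer $n$ is representable if $n=\sum_i a_ix_i$ with all $x_i$ nonnegative integers. $B_m(x)$ denotes the Bernoulli polynomials, defined by $\frac{te^{tx}}{e^t-1}=\sum_{m\ge0}B_m(x)\frac{t^m}{m!}$, and $B_m=B_m(0)$ are the Bernoulli numbers. *)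

(* Defs.v *)
From Stdlib Require Import Reals List.
From Coquelicot Require Import Coquelicot.
Import ListNotations.

Definition Cexp (z : C) : C :=
  (exp (Re z) * cos (Im z), exp (Re z) * sin (Im z))%R.

Definition gcd_list (l : list nat) : nat := fold_right Nat.gcd 0%nat l.

(* n = sum_i a_i x_i with x_i nonnegative integers *)
Definition representable (as_ : list nat) (n : nat) : Prop :=
  exists xs : list nat, length xs = length as_ /\
    n = fold_right (fun p acc => (fst p * snd p + acc)%nat) 0%nat (combine as_ xs).

Definition NRset (as_ : list nat) (n : nat) : Prop :=
  (0 < n)%nat /\ ~ representable as_ n.

(* Nset0 = {n > 0 : n representable, n - a not representable (as an integer)} U {0};
   for n < a, n - a < 0 is never representable. *)
Definition Nset0 (as_ : list nat) (a n : nat) : Prop :=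
  n = 0%nat \/
  ((0 < n)%nat /\ representable as_ n /\ ~ ((a <= n)%nat /\ representable as_ (n - a))).

Definition enumerates (l : list nat) (P : nat -> Prop) : Prop :=
  NoDup l /\ forall n, In n l <-> P n.

Definition Csum_list (l : list nat) (f : nat -> C) : C :=
  fold_right (fun n acc => Cplus (f n) acc) (RtoC 0) l.
Definition Rsum_list (l : list nat) (f : nat -> R) : R :=
  fold_right (fun n acc => (f n + acc)%R) 0%R l.

(* Bernoulli numbers B_0..B_n via the recurrence sum_{k=0}^{m} C(m+1,k) B_k = 0 (m>=1),
   B_0 = 1 (equivalent to t/(e^t-1) = sum B_m t^m/m!, so B_1 = -1/2). *)
Fixpoint bern_list (n : nat) : list R :=
  match n with
  | O => [1%R]
  | S n' => let l := bern_list n' in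
      l ++ [(- / INR (S n) * sum_f_R0 (fun k => Binomial.C (S n) k * nth k l 0) n')%R]
  end.

Definition bernoulli (m : nat) : R := nth m (bern_list m) 0%R.

Definition bernoulli_poly (m : nat) (x : R) : R :=
  sum_f_R0 (fun k => Binomial.C m k * bernoulli k * x ^ (m - k))%R m.

(* Main.v *)
Require Import Defs.
From Stdlib Require Import Reals List Lia Lra ClassicalEpsilon Classical.
From Coquelicot Require Import Coquelicot.
Import ListNotations.

Open Scope R_scope.

Lemma zero_deriv (f : R -> R) : (forall x, is_derive f x 0) -> forall x, f x = f 0.
Proof.
  intros H x.
  set (pr := fun y => exist (fun l => derivable_pt_abs f y l) 0
                  (proj1 (is_derive_Reals f y 0) (H y)) : derivable_pt f y).
  apply (null_derivative_1 f pr). intros y. reflexivity.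
Qed.

Lemma is_derive_sumf (f f' : nat -> R -> R) n x :
  (forall k, (k <= n)%nat -> is_derive (f k) x (f' k x)) ->
  is_derive (fun y => sum_f_R0 (fun k => f k y) n) x (sum_f_R0 (fun k => f' k x) n).
Proof.
  induction n; intros H; simpl.
  - apply H; lia.
  - apply (is_derive_plus (fun y => sum_f_R0 (fun k => f k y) n) (f (S n))).
    + apply IHn; intros; apply H; lia.
    + apply H; lia.
Qed.

Lemma bern_list_S n : bern_list (S n) = bern_list n ++
  [(- / INR (S (S n)) * sum_f_R0 (fun k => Binomial.C (S (S n)) k * nth k (bern_list n) 0) n)%R].
Proof. reflexivity. Qed.

Lemma bern_list_len n : length (bern_list n) = S n.
Proof. induction n; [reflexivity|]. rewrite bern_list_S, length_app, IHn; simpl; lia. Qed.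

Lemma bern_list_prefix n k : (k <= n)%nat -> nth k (bern_list n) 0 = bernoulli k.
Proof.
  induction n; intros Hk.
  - assert (k = 0%nat) by lia; subst; reflexivity.
  - destruct (Nat.eq_dec k (S n)) as [->|Hne]; [reflexivity|].
    rewrite bern_list_S, app_nth1 by (rewrite bern_list_len; lia).
    apply IHn; lia.
Qed.

Lemma C_n_1 n : Binomial.C (S n) 1 = INR (S n).
Proof.
  rewrite pascal_step3 by lia. rewrite C_n_0. replace (S n - 0)%nat with (S n) by lia. simpl (INR 1). field.
Qed.

Lemma bern_rec n : sum_f_R0 (fun k => Binomial.C (S (S n)) k * bernoulli k) (S n) = 0.
Proof.
  rewrite tech5.
  assert (HB : bernoulli (S n) = - / INR (S (S n)) *
     sum_f_R0 (fun k => Binomial.C (S (S n)) k * bernoulli k) n).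
  { unfold bernoulli at 1. rewrite bern_list_S, app_nth2 by (rewrite bern_list_len; lia).
    rewrite bern_list_len, Nat.sub_diag. simpl nth. f_equal.
    apply sum_eq. intros i Hi. rewrite bern_list_prefix by lia. reflexivity. }
  rewrite HB. rewrite pascal_step1 by lia.
  replace (S (S n) - S n)%nat with 1%nat by lia. rewrite (C_n_1 (S n)).
  field. apply not_0_INR. lia.
Qed.

Lemma BP0 m : bernoulli_poly m 0 = bernoulli m.
Proof.
  unfold bernoulli_poly. destruct m.
  - simpl. rewrite C_n_0. ring.
  - rewrite tech5. rewrite Nat.sub_diag, C_n_n.
    rewrite (sum_eq _ (fun _ => 0)).
    + rewrite sum_cte. simpl. ring.
    + intros i Hi. rewrite pow_i by lia. ring.
Qed.

Lemma BP1 m : bernoulli_poly (S m) 1 - bernoulli_poly (S m) 0 - INR (S m) * 0 ^ m = 0.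
Proof.
  rewrite BP0. unfold bernoulli_poly.
  rewrite (sum_eq _ (fun k => Binomial.C (S m) k * bernoulli k)).
  2:{ intros; rewrite pow1; ring. }
  destruct m.
  - simpl. rewrite C_n_0, C_n_n. unfold bernoulli. simpl. field.
  - rewrite tech5. rewrite bern_rec. rewrite C_n_n. rewrite pow_i by lia. ring.
Qed.

Lemma C_S_mul m k : (k <= m)%nat ->
  Binomial.C (S m) k * INR (S m - k) = INR (S m) * Binomial.C m k.
Proof.
  intros Hk. rewrite pascal_step2 by lia. field. apply not_0_INR. lia.
Qed.

Lemma is_derive_val (f : R -> R) (x l l' : R) : is_derive f x l -> l = l' -> is_derive f x l'.
Proof. intros H <-; exact H. Qed.

Lemma is_derive_mono c p x : is_derive (fun y => c * y ^ p) x (c * (INR p * x ^ pred p)).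
Proof.
  apply is_derive_scal.
  eapply is_derive_val; [apply (is_derive_pow (fun y => y) p x 1 (is_derive_id x))|].
  simpl. ring.
Qed.

Lemma BP_deriv m x : is_derive (bernoulli_poly (S m)) x (INR (S m) * bernoulli_poly m x).
Proof.
  eapply is_derive_val.
  { apply (is_derive_sumf (fun k y => Binomial.C (S m) k * bernoulli k * y ^ (S m - k))
          (fun k y => Binomial.C (S m) k * bernoulli k * (INR (S m - k) * y ^ pred (S m - k)))).
    intros k _. apply is_derive_mono. }
  rewrite tech5. rewrite Nat.sub_diag. simpl (INR 0). rewrite Rmult_0_l, Rmult_0_r, Rplus_0_r.
  unfold bernoulli_poly. rewrite scal_sum. apply sum_eq. intros i Hi.
  replace (pred (S m - i)) with (m - i)%nat by lia.
  pose proof (C_S_mul m i Hi). transitivity (Binomial.C (S m) i * INR (S m - i) * bernoulli i * x ^ (m - i)); [ring|]. rewrite H. ring.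
Qed.

Lemma BP_0 x : bernoulli_poly 0 x = 1.
Proof. unfold bernoulli_poly. simpl. rewrite C_n_0. unfold bernoulli. simpl. ring. Qed.

Lemma BP_deriv_comp m (g : R -> R) x dg : is_derive g x dg ->
  is_derive (fun y => bernoulli_poly (S m) (g y)) x (INR (S m) * bernoulli_poly m (g x) * dg).
Proof.
  intros Hg. eapply is_derive_val.
  { apply (is_derive_comp (bernoulli_poly (S m)) g x _ dg (BP_deriv m (g x)) Hg). }
  simpl. unfold scal; simpl. unfold mult; simpl. ring.
Qed.

Definition Eb m x := bernoulli_poly m (x + 1) - bernoulli_poly m x - INR m * x ^ pred m.

Lemma Eb_deriv m x : is_derive (Eb (S m)) x (INR (S m) * Eb m x).
Proof.
  unfold Eb.
  eapply is_derive_val.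
  { apply (is_derive_minus (fun y => bernoulli_poly (S m) (y + 1) - bernoulli_poly (S m) y)
                            (fun y => INR (S m) * y ^ pred (S m))).
    - apply (is_derive_minus (fun y => bernoulli_poly (S m) (y + 1)) (bernoulli_poly (S m))).
      + apply BP_deriv_comp.
        eapply is_derive_val.
        { apply (is_derive_plus (fun y => y) (fun _ => 1) x _ _ (is_derive_id x) (is_derive_const 1 x)). }
        reflexivity.
      + apply BP_deriv.
    - apply is_derive_mono. }
  unfold minus, plus, opp, one, zero; simpl. ring.
Qed.

Lemma Eb_zero m x : Eb m x = 0.
Proof.
  revert x; induction m; intros x.
  - unfold Eb. rewrite !BP_0. simpl. ring.
  - rewrite (zero_deriv (Eb (S m))).
    + unfold Eb. rewrite Rplus_0_l. simpl pred. apply BP1.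
    + intros y. eapply is_derive_val; [apply Eb_deriv|]. rewrite IHm. apply Rmult_0_r.
Qed.

Lemma BP_shift m x : bernoulli_poly (S m) (x + 1) - bernoulli_poly (S m) x = INR (S m) * x ^ m.
Proof. pose proof (Eb_zero (S m) x). unfold Eb in H. simpl pred in H. lra. Qed.

Definition rs (n : nat) (f : nat -> R) : R := Rsum_list (seq 0 n) f.

Lemma Rsum_list_app l1 l2 f : Rsum_list (l1 ++ l2) f = Rsum_list l1 f + Rsum_list l2 f.
Proof. induction l1; simpl; [ring|]. rewrite IHl1. ring. Qed.

Lemma rs_S n f : rs (S n) f = rs n f + f n.
Proof. unfold rs. rewrite seq_S, Rsum_list_app. simpl. ring. Qed.

Lemma rs_ext n f g : (forall k, (k < n)%nat -> f k = g k) -> rs n f = rs n g.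
Proof.
  induction n; intros H; [reflexivity|]. rewrite !rs_S, IHn by (intros; apply H; lia).
  rewrite H by lia. reflexivity.
Qed.

Lemma rs_scal n c f : rs n (fun k => c * f k) = c * rs n f.
Proof. induction n; [unfold rs; simpl; ring|]. rewrite !rs_S, IHn. ring. Qed.

Lemma rs_const n : rs n (fun _ => 1) = INR n.
Proof. induction n; [reflexivity|]. rewrite rs_S, IHn, S_INR. ring. Qed.

Lemma rs_tele n h : rs n (fun k => h (S k)) - rs n h = h n - h 0%nat.
Proof. induction n; [unfold rs; simpl; ring|]. rewrite !rs_S. lra. Qed.

Lemma is_derive_rs (f f' : nat -> R -> R) n x :
  (forall k, is_derive (f k) x (f' k x)) ->
  is_derive (fun y => rs n (fun k => f k y)) x (rs n (fun k => f' k x)).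
Proof.
  induction n; intros H.
  - unfold rs; simpl. apply (is_derive_const 0 x).
  - eapply is_derive_ext. { intros t. symmetry. apply rs_S. }
    rewrite rs_S. apply (is_derive_plus (fun y => rs n (fun k => f k y)) (f n)); auto.
Qed.

Section Raabe.
Variable a : nat.
Hypothesis Ha : (0 < a)%nat.

Definition Gr m x := INR a ^ m / INR a * rs a (fun k => bernoulli_poly m ((x + INR k) / INR a)).
Definition Dr m x := Gr m x - bernoulli_poly m x.

Lemma INRa_nz : INR a <> 0.
Proof. apply not_0_INR. lia. Qed.

Lemma Gr_deriv m (x : R) : is_derive (Gr (S m)) x (INR (S m) * Gr m x).
Proof.
  unfold Gr. eapply is_derive_val.
  { apply is_derive_scal.
    apply (is_derive_rs (fun k y => bernoulli_poly (S m) ((y + INR k) / INR a))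
             (fun k y => INR (S m) * bernoulli_poly m ((y + INR k) / INR a) * / INR a)).
    intros k. apply (BP_deriv_comp m (fun y => (y + INR k) / INR a)).
    apply (is_derive_ext (fun y => / INR a * (y + INR k))).
    { intros t. unfold Rdiv. apply Rmult_comm. }
    eapply is_derive_val.
    { apply (is_derive_scal (fun y => y + INR k) x (/ INR a) 1).
      eapply is_derive_val.
      { apply (is_derive_plus (fun y => y) (fun _ => INR k) x _ _ (is_derive_id x) (is_derive_const _ x)). }
      exact (Rplus_0_r 1). }
    simpl. apply Rmult_1_r. }
  assert (E : forall k, INR (S m) * bernoulli_poly m ((x + INR k) / INR a) * / INR a
     = (INR (S m) * / INR a) * bernoulli_poly m ((x + INR k) / INR a)) by (intros; ring).
  rewrite (rs_ext _ _ _ (fun k _ => E k)).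
  rewrite rs_scal. simpl pow. field. apply INRa_nz.
Qed.

Lemma Gr_shift m (x : R) : Gr (S m) (x + 1) - Gr (S m) x = INR (S m) * x ^ m.
Proof.
  unfold Gr.
  rewrite (rs_ext _ (fun k => bernoulli_poly (S m) ((x + 1 + INR k) / INR a))
     (fun k => bernoulli_poly (S m) ((x + INR (S k)) / INR a))).
  2:{ intros k _. rewrite S_INR. f_equal. f_equal. ring. }
  rewrite <- Rmult_minus_distr_l.
  rewrite (rs_tele a (fun k => bernoulli_poly (S m) ((x + INR k) / INR a))).
  replace ((x + INR a) / INR a) with (x / INR a + 1) by (field; apply INRa_nz).
  replace ((x + INR 0) / INR a) with (x / INR a) by (simpl; field; apply INRa_nz).
  rewrite BP_shift. unfold Rdiv. rewrite Rpow_mult_distr.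
  simpl pow. field_simplify. 2: apply INRa_nz.
  replace (INR a ^ m * INR (S m) * x ^ m * (/ INR a) ^ m) with ((INR a * / INR a) ^ m * (INR (S m) * x ^ m)) by (rewrite Rpow_mult_distr; ring). rewrite Rinv_r by apply INRa_nz. rewrite pow1. ring.
Qed.

Lemma Dr_deriv m (x : R) : is_derive (Dr (S m)) x (INR (S m) * Dr m x).
Proof.
  unfold Dr. eapply is_derive_val.
  { apply (is_derive_minus (Gr (S m)) (bernoulli_poly (S m))); [apply Gr_deriv|apply BP_deriv]. }
  unfold minus, plus, opp; simpl. ring.
Qed.

Lemma Dr_zero m (x : R) : Dr m x = 0.
Proof.
  revert x; induction m; intros x.
  - unfold Dr, Gr. rewrite BP_0. rewrite (rs_ext _ _ (fun _ => 1)) by (intros; apply BP_0).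
    rewrite rs_const. simpl. field. apply INRa_nz.
  - set (c := Dr (S m) 0).
    assert (Hc : forall y, Dr (S m) y = c).
    { intros y. apply (zero_deriv (Dr (S m))). intros t.
      eapply is_derive_val; [apply Dr_deriv|]. rewrite IHm. ring. }
    assert (Hh : forall y, (fun t => Dr (S (S m)) t - INR (S (S m)) * c * t) y =
                           (fun t => Dr (S (S m)) t - INR (S (S m)) * c * t) 0).
    { apply zero_deriv. intros t. eapply is_derive_val.
      { apply (is_derive_minus (Dr (S (S m))) (fun t => INR (S (S m)) * c * t)).
        - apply Dr_deriv.
        - apply is_derive_scal. apply (is_derive_id t). }
      rewrite Hc. unfold minus, plus, opp, one; simpl. ring. }
    specialize (Hh 1). cbv beta in Hh.
    assert (Hp : Dr (S (S m)) (0 + 1) - Dr (S (S m)) 0 = 0).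
    { unfold Dr. pose proof (Gr_shift (S m) 0). pose proof (BP_shift (S m) 0). lra. }
    rewrite Rplus_0_l in Hp.
    rewrite Hc. 
    assert (INR (S (S m)) * c = 0) by (rewrite Rmult_1_r, Rmult_0_r in Hh; lra).
    apply Rmult_integral in H. destruct H as [H|H]; [|exact H].
    exfalso. revert H. apply not_0_INR. lia.
Qed.

Lemma raabe m : (1 <= m)%nat ->
  INR a ^ (m - 1) * rs a (fun k => bernoulli_poly m (INR k / INR a)) = bernoulli m.
Proof.
  intros Hm. pose proof (Dr_zero m 0) as H. unfold Dr, Gr in H. rewrite BP0 in H.
  rewrite (rs_ext _ _ (fun k => bernoulli_poly m (INR k / INR a))) in H
    by (intros; rewrite Rplus_0_l; reflexivity).
  destruct m; [lia|]. replace (S m - 1)%nat with m by lia.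
  simpl pow in H. field_simplify in H; [|apply INRa_nz]. lra.
Qed.
End Raabe.
Close Scope R_scope.

Lemma rep_nil n : representable [] n <-> n = 0%nat.
Proof.
  split.
  - intros [xs [Hl Hn]]. destruct xs; [|discriminate]. exact Hn.
  - intros ->. exists []. split; reflexivity.
Qed.

Lemma rep_cons x l n : representable (x :: l) n <->
  exists y r, representable l r /\ n = (x * y + r)%nat.
Proof.
  split.
  - intros [xs [Hl Hn]]. destruct xs as [|y ys]; [discriminate|].
    exists y, (fold_right (fun p acc => (fst p * snd p + acc)%nat) 0%nat (combine l ys)).
    split; [|exact Hn]. exists ys. split; [simpl in Hl; lia|reflexivity].
  - intros [y [r [[ys [Hl Hr]] Hn]]]. exists (y :: ys). split; [simpl; lia|].
    simpl. rewrite Hn, Hr. reflexivity.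
Qed.

Lemma rep0 l : representable l 0.
Proof.
  induction l. - apply rep_nil; reflexivity.
  - apply rep_cons. exists 0%nat, 0%nat. split; [exact IHl|lia].
Qed.

Lemma rep_add l n m : representable l n -> representable l m -> representable l (n + m).
Proof.
  revert n m; induction l as [|x l IH]; intros n m Hn Hm.
  - apply rep_nil in Hn, Hm. apply rep_nil. lia.
  - apply rep_cons in Hn as [y1 [r1 [H1 ->]]]. apply rep_cons in Hm as [y2 [r2 [H2 ->]]].
    apply rep_cons. exists (y1 + y2)%nat, (r1 + r2)%nat. split; [apply IH; auto|lia].
Qed.

Lemma rep_weak x l n : representable l n -> representable (x :: l) n.
Proof. intros H. apply rep_cons. exists 0%nat, n. split; [exact H|lia]. Qed.

Lemma rep_in l x : In x l -> representable l x.
Proof.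
  induction l as [|y l IH]; intros H; [destruct H|].
  destruct H as [->|H].
  - apply rep_cons. exists 1%nat, 0%nat. split; [apply rep0|lia].
  - apply rep_weak, IH, H.
Qed.

Lemma rep_mul l k n : representable l n -> representable l (k * n).
Proof.
  intros H. induction k; [apply rep0|].
  replace (S k * n)%nat with (n + k * n)%nat by lia. apply rep_add; auto.
Qed.

Lemma rep_bez l : exists P Q, representable l P /\ representable l Q /\ P = (Q + gcd_list l)%nat.
Proof.
  induction l as [|x l IH].
  - exists 0%nat, 0%nat. split; [apply rep0|split; [apply rep0|reflexivity]].
  - destruct IH as [P [Q [HP [HQ HPQ]]]]. simpl gcd_list.
    set (g := gcd_list l) in *.
    destruct (Nat.eq_dec g 0) as [Hg|Hg].
    + rewrite Hg, Nat.gcd_0_r. exists x, 0%nat. split; [apply rep_in; left; reflexivity|].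
      split; [apply rep0|lia].
    + destruct (Nat.gcd_bezout_pos g x) as [u [v Huv]]; [lia|].
      rewrite Nat.gcd_comm in Huv.
      exists (u * P)%nat, (v * x + u * Q)%nat.
      split; [apply rep_weak, rep_mul, HP|].
      split; [apply rep_add; [apply rep_mul, rep_in; left; reflexivity|apply rep_weak, rep_mul, HQ]|].
      rewrite HPQ. nia.
Qed.

Lemma frob l : gcd_list l = 1%nat -> exists N, forall n, (N <= n)%nat -> representable l n.
Proof.
  intros Hg. destruct (rep_bez l) as [P [Q [HP [HQ HPQ]]]]. rewrite Hg in HPQ.
  exists (Q * Q)%nat. intros n Hn.
  destruct (Nat.eq_dec Q 0) as [HQ0|HQ0].
  - replace n with (n * P)%nat by nia. apply rep_mul, HP.
  - pose proof (Nat.div_mod n Q HQ0) as Hd. pose proof (Nat.mod_upper_bound n Q HQ0) as Hr.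
    set (q := (n / Q)%nat) in *. set (r := (n mod Q)%nat) in *.
    assert (Hq : (Q <= q)%nat).
    { apply Nat.div_le_lower_bound; lia. }
    replace n with ((q - r) * Q + r * P)%nat by nia.
    apply rep_add; apply rep_mul; assumption.
Qed.
Open Scope R_scope.

Lemma finite_enum (P : nat -> Prop) N : (forall n, P n -> (n < N)%nat) -> exists l, enumerates l P.
Proof.
  intros HB.
  assert (H : forall M, exists l, NoDup l /\ forall n, In n l <-> ((n < M)%nat /\ P n)).
  { induction M.
    - exists []. split; [constructor|]. intros n; simpl; split; [tauto|lia].
    - destruct IHM as [l [Hl Hin]]. destruct (classic (P M)) as [HP|HP].
      + exists (M :: l). split.
        * constructor; [|exact Hl]. intros HM. apply Hin in HM. lia.
        * intros n. simpl. rewrite Hin. split.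
          -- intros [<-|[H1 H2]]; split; auto; lia.
          -- intros [H1 H2]. destruct (Nat.eq_dec M n); [left; auto|right; split; auto; lia].
      + exists l. split; [exact Hl|]. intros n. rewrite Hin. split.
        * intros [H1 H2]; split; auto; lia.
        * intros [H1 H2]. split; auto. destruct (Nat.eq_dec n M); [subst; contradiction|lia]. }
  destruct (H N) as [l [Hl Hin]]. exists l. split; [exact Hl|].
  intros n. rewrite Hin. split; [tauto|]. intros Hp; split; auto.
Qed.

Definition ind (P : Prop) : R := if excluded_middle_informative P then 1 else 0.

Lemma ind_true (P : Prop) : P -> ind P = 1.
Proof. intros H. unfold ind. destruct (excluded_middle_informative P); tauto. Qed.
Lemma ind_false (P : Prop) : ~ P -> ind P = 0.
Proof. intros H. unfold ind. destruct (excluded_middle_informative P); tauto. Qed.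

Lemma rs_plus n f g : rs n (fun k => f k + g k) = rs n f + rs n g.
Proof. induction n; [unfold rs; simpl; ring|]. rewrite !rs_S, IHn. ring. Qed.

Lemma rs_zero n : rs n (fun _ => 0) = 0.
Proof. induction n; [reflexivity|]. rewrite rs_S, IHn. ring. Qed.

Lemma rs_single M x f : (x < M)%nat -> rs M (fun n => ind (n = x) * f n) = f x.
Proof.
  induction M; intros Hx; [lia|]. rewrite rs_S.
  destruct (Nat.eq_dec x M) as [->|Hne].
  - rewrite (rs_ext _ _ (fun _ => 0)), rs_zero.
    + rewrite ind_true by reflexivity. ring.
    + intros k Hk. rewrite ind_false by lia. ring.
  - rewrite IHM by lia. rewrite ind_false by lia. ring.
Qed.

Lemma sum_enum l (P : nat -> Prop) M f : enumerates l P -> (forall n, P n -> (n < M)%nat) ->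
  Rsum_list l f = rs M (fun n => ind (P n) * f n).
Proof.
  revert P; induction l as [|x l IH]; intros P [Hnd Hin] HB.
  - simpl. rewrite (rs_ext _ _ (fun _ => 0)), rs_zero; [reflexivity|].
    intros k _. rewrite ind_false; [ring|]. intros Hk. apply Hin in Hk. destruct Hk.
  - apply NoDup_cons_iff in Hnd as [Hx Hnd].
    assert (Hen : enumerates l (fun n => P n /\ n <> x)).
    { split; [exact Hnd|]. intros n. split.
      - intros Hn. split; [apply Hin; right; exact Hn|]. intros ->. contradiction.
      - intros [Hn Hne]. apply Hin in Hn. destruct Hn; [congruence|assumption]. }
    simpl. rewrite (IH _ Hen) by (intros n [Hn _]; apply HB, Hn).
    rewrite <- (rs_single M x f) by (apply HB, Hin; left; reflexivity).
    rewrite <- rs_plus. apply rs_ext. intros k _.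
    destruct (Nat.eq_dec k x) as [->|Hne].
    + rewrite (ind_false (P x /\ x <> x)) by tauto. rewrite ind_true by reflexivity.
      rewrite ind_true by (apply Hin; left; reflexivity). ring.
    + rewrite (ind_false (k = x)) by exact Hne.
      destruct (classic (P k)) as [Hp|Hp].
      * rewrite !ind_true by tauto. ring.
      * rewrite !ind_false by tauto. ring.
Qed.

Lemma Rsum_list_map l h f : Rsum_list (map h l) f = Rsum_list l (fun n => f (h n)).
Proof. induction l; simpl; [reflexivity|]. rewrite IHl. reflexivity. Qed.
Lemma Rsum_list_scal l c f : Rsum_list l (fun n => c * f n) = c * Rsum_list l f.
Proof. induction l; simpl; [ring|]. rewrite IHl. ring. Qed.
Lemma Rsum_list_plus l f g : Rsum_list l (fun n => f n + g n) = Rsum_list l f + Rsum_list l g.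
Proof. induction l; simpl; [ring|]. rewrite IHl. ring. Qed.
Lemma Rsum_list_ext l f g : (forall n, f n = g n) -> Rsum_list l f = Rsum_list l g.
Proof. intros H; induction l; simpl; [ring|]. rewrite IHl, H. ring. Qed.
Lemma Csum_split l f : Csum_list l f =
  (Rsum_list l (fun n => fst (f n)), Rsum_list l (fun n => snd (f n))).
Proof. induction l; simpl; [reflexivity|]. rewrite IHl. reflexivity. Qed.
Lemma Csum_list_map l h f : Csum_list (map h l) f = Csum_list l (fun n => f (h n)).
Proof. induction l; simpl; [reflexivity|]. rewrite IHl. reflexivity. Qed.
Lemma Csum_list_scal l c f : Csum_list l (fun n => (c * f n)%C) = (c * Csum_list l f)%C.
Proof. unfold Csum_list in *. induction l; simpl; [ring|]. rewrite IHl. ring. Qed.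

Section Key.
Variable as_ : list nat.
Variable a : nat.
Hypothesis Hpos : List.Forall (fun ai => (0 < ai)%nat) as_.
Hypothesis Hg : gcd_list as_ = 1%nat.
Hypothesis Ha : In a as_.

Lemma a_pos : (0 < a)%nat.
Proof. rewrite List.Forall_forall in Hpos. apply Hpos, Ha. Qed.

Definition Nb : nat := proj1_sig (constructive_indefinite_description _ (frob as_ Hg)).
Lemma Nb_spec n : (Nb <= n)%nat -> representable as_ n.
Proof. unfold Nb. destruct (constructive_indefinite_description _ _) as [N HN]. apply HN. Qed.

Lemma NR_bound n : NRset as_ n -> (n < Nb)%nat.
Proof. intros [_ Hn]. destruct (Nat.lt_ge_cases n Nb); [assumption|]. exfalso; apply Hn, Nb_spec; lia. Qed.

Lemma N0_bound n : Nset0 as_ a n -> (n < Nb + a)%nat.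
Proof.
  pose proof a_pos. intros [->|[_ [_ Hn]]]; [lia|].
  destruct (Nat.lt_ge_cases n (Nb + a)); [assumption|]. exfalso; apply Hn. split; [lia|]. apply Nb_spec; lia.
Qed.

Lemma rep_plus_a n : representable as_ n -> representable as_ (n + a).
Proof. intros H. apply rep_add; [exact H|apply rep_in, Ha]. Qed.

Lemma ind_pointwise n : ind (Nset0 as_ a n) =
  ind (n < a)%nat - ind (NRset as_ n) + ind ((a <= n)%nat /\ NRset as_ (n - a)).
Proof.
  pose proof a_pos.
  assert (HNR : forall k, NRset as_ k <-> ~ representable as_ k).
  { intros k. split; [intros [_ H0]; exact H0|]. intros H0. split; [|exact H0].
    destruct k; [exfalso; apply H0, rep0|lia]. }
  destruct (Nat.lt_ge_cases n a) as [Hlt|Hge].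
  - rewrite (ind_true (n < a)%nat) by exact Hlt. rewrite (ind_false (_ /\ _)) by lia.
    destruct (classic (representable as_ n)) as [Hr|Hr].
    + rewrite ind_true. rewrite ind_false by (rewrite HNR; tauto). ring.
      destruct n; [left; reflexivity|right; split; [lia|split; [exact Hr|lia]]].
    + rewrite ind_false. rewrite ind_true by (apply HNR; exact Hr). ring.
      intros [->|[_ [Hr' _]]]; [apply Hr, rep0|contradiction].
  - rewrite (ind_false (n < a)%nat) by lia.
    destruct (classic (representable as_ (n - a))) as [Hr|Hr].
    + assert (Hn : representable as_ n) by (replace n with (n - a + a)%nat by lia; apply rep_plus_a, Hr).
      rewrite ind_false. rewrite ind_false by (rewrite HNR; tauto).
      rewrite ind_false by (rewrite HNR; tauto). ring.
      intros [->|[_ [_ Hx]]]; [lia|apply Hx; split; [lia|exact Hr]].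
    + rewrite (ind_true (_ /\ _)) by (split; [lia|apply HNR, Hr]).
      destruct (classic (representable as_ n)) as [Hn|Hn].
      * rewrite ind_true. rewrite ind_false by (rewrite HNR; tauto). ring.
        right. split; [lia|split; [exact Hn|]]. intros [_ Hx]; contradiction.
      * rewrite ind_false. rewrite ind_true by (apply HNR; exact Hn). ring.
        intros [->|[_ [Hx _]]]; [lia|contradiction].
Qed.

Lemma enum_seq : enumerates (seq 0 a) (fun n => (n < a)%nat).
Proof. split; [apply seq_NoDup|]. intros n. rewrite in_seq. lia. Qed.

Lemma enum_shift lNR : enumerates lNR (NRset as_) ->
  enumerates (map (fun n => (n + a)%nat) lNR) (fun n => (a <= n)%nat /\ NRset as_ (n - a)).
Proof.
  intros [Hnd Hin]. split.
  - apply NoDup_map_NoDup_ForallPairs; [|exact Hnd]. intros x y _ _ H; lia.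
  - intros n. rewrite in_map_iff. split.
    + intros [x [<- Hx]]. split; [lia|]. replace (x + a - a)%nat with x by lia. apply Hin, Hx.
    + intros [H1 H2]. exists (n - a)%nat. split; [lia|apply Hin, H2].
Qed.

Lemma key_R lNR lN0 f : enumerates lNR (NRset as_) -> enumerates lN0 (Nset0 as_ a) ->
  Rsum_list lN0 f = Rsum_list (seq 0 a) f - Rsum_list lNR f + Rsum_list lNR (fun n => f (n + a)%nat).
Proof.
  intros HNR HN0.
  rewrite <- (Rsum_list_map lNR (fun n => (n + a)%nat) f).
  rewrite (sum_enum _ _ (Nb + a) f HN0 N0_bound).
  rewrite (sum_enum _ _ (Nb + a) f enum_seq) by lia.
  rewrite (sum_enum _ _ (Nb + a) f HNR) by (intros n Hn; apply NR_bound in Hn; lia).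
  rewrite (sum_enum _ _ (Nb + a) f (enum_shift lNR HNR))
    by (intros n [H1 H2]; apply NR_bound in H2; lia).
  rewrite (rs_ext _ _ (fun n => ind (n < a)%nat * f n + (-1) * (ind (NRset as_ n) * f n)
        + ind ((a <= n)%nat /\ NRset as_ (n - a)) * f n))
    by (intros; rewrite ind_pointwise; ring).
  rewrite !rs_plus, rs_scal. ring.
Qed.

End Key.

Lemma Cexp_add u v : Cexp (u + v) = (Cexp u * Cexp v)%C.
Proof.
  destruct u as [u1 u2], v as [v1 v2]. unfold Cexp, Re, Im; simpl.
  rewrite exp_plus, cos_plus, sin_plus. apply injective_projections; simpl; ring.
Qed.

Lemma Cexp_0 : Cexp (RtoC 0) = RtoC 1.
Proof. unfold Cexp, Re, Im; simpl. rewrite exp_0, cos_0, sin_0. apply injective_projections; simpl; ring. Qed.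

Lemma RtoC_mult_add x y z : (RtoC (x + y) * z = RtoC x * z + RtoC y * z)%C.
Proof. rewrite RtoC_plus. ring. Qed.

Lemma Cexp_S n z : Cexp (RtoC (INR (S n)) * z) = (Cexp (RtoC (INR n) * z) * Cexp z)%C.
Proof. rewrite S_INR, RtoC_mult_add, <- Cexp_add. f_equal. ring. Qed.

Lemma Cexp_add_nat n k z : Cexp (RtoC (INR (n + k)) * z) = (Cexp (RtoC (INR k) * z) * Cexp (RtoC (INR n) * z))%C.
Proof. rewrite plus_INR, RtoC_mult_add, <- Cexp_add. f_equal. ring. Qed.

Lemma Csum_list_app l1 l2 f : Csum_list (l1 ++ l2) f = (Csum_list l1 f + Csum_list l2 f)%C.
Proof. unfold Csum_list. induction l1; simpl; [ring|]. rewrite IHl1. ring. Qed.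

Lemma Csum_list_ext l f g : (forall n, f n = g n) -> Csum_list l f = Csum_list l g.
Proof. intros H; unfold Csum_list; induction l; simpl; [reflexivity|]. rewrite IHl, H. reflexivity. Qed.

Lemma geom a z : ((Cexp z - 1) * Csum_list (seq 0 a) (fun n => Cexp (RtoC (INR n) * z)) =
   Cexp (RtoC (INR a) * z) - 1)%C.
Proof.
  induction a.
  - simpl. rewrite Cmult_0_l, Cexp_0. unfold Csum_list; simpl. ring.
  - rewrite seq_S, Csum_list_app. simpl (0 + a)%nat.
    unfold Csum_list at 2. simpl fold_right.
    rewrite Cexp_S. rewrite Cmult_plus_distr_l, IHa. ring.
Qed.

Lemma Cexp_one_pow z n : Cexp z = RtoC 1 -> Cexp (RtoC (INR n) * z) = RtoC 1.
Proof.
  intros H. induction n.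
  - simpl. rewrite Cmult_0_l. apply Cexp_0.
  - rewrite Cexp_S, IHn, H. ring.
Qed.

Lemma key_C as_ a (Hpos : List.Forall (fun ai => (0 < ai)%nat) as_) (Hg : gcd_list as_ = 1%nat)
  (Ha : In a as_) lNR lN0 f : enumerates lNR (NRset as_) -> enumerates lN0 (Nset0 as_ a) ->
  Csum_list lN0 f = (Csum_list (seq 0 a) f - Csum_list lNR f + Csum_list lNR (fun n => f (n + a)%nat))%C.
Proof.
  intros H1 H2. rewrite !Csum_split.
  rewrite (key_R as_ a Hpos Hg Ha lNR lN0 (fun n => fst (f n)) H1 H2).
  rewrite (key_R as_ a Hpos Hg Ha lNR lN0 (fun n => snd (f n)) H1 H2).
  unfold Cminus, Cplus, Copp; simpl. reflexivity.
Qed.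

Theorem mainTheorem2 (as_ : list nat) (a : nat) :
  List.Forall (fun ai => (0 < ai)%nat) as_ ->
  gcd_list as_ = 1%nat ->
  In a as_ ->
  (exists lNR, enumerates lNR (NRset as_)) /\
  (exists lN0, enumerates lN0 (Nset0 as_ a)) /\
  forall lNR lN0, enumerates lNR (NRset as_) -> enumerates lN0 (Nset0 as_ a) ->
    (forall z : C, z <> RtoC 0 -> Cexp (RtoC (INR a) * z) <> RtoC 1 ->
       Csum_list lNR (fun n => Cexp (RtoC (INR n) * z)) =
       Cminus (Cmult (Cinv (Cminus (Cexp (RtoC (INR a) * z)) (RtoC 1)))
                     (Csum_list lN0 (fun n => Cexp (RtoC (INR n) * z))))
              (Cinv (Cminus (Cexp z) (RtoC 1)))) /\
    (forall m : nat, (1 <= m)%nat ->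
       (INR m * Rsum_list lNR (fun n => INR n ^ (m - 1)) =
        INR a ^ (m - 1) * Rsum_list lN0 (fun n => bernoulli_poly m (INR n / INR a))
        - bernoulli m)%R).
Proof.
  intros Hpos Hg Ha.
  pose proof (a_pos as_ a Hpos Ha) as Hapos.
  split; [apply (finite_enum _ _ (NR_bound as_ Hg))|].
  split; [apply (finite_enum _ _ (N0_bound as_ a Hpos Hg Ha))|].
  intros lNR lN0 HNR HN0. split.
  - intros z _ Hy.
    rewrite (key_C as_ a Hpos Hg Ha lNR lN0 _ HNR HN0).
    rewrite (Csum_list_ext lNR (fun n => Cexp (RtoC (INR (n + a)) * z)) (fun n => (Cexp (RtoC (INR a) * z) * Cexp (RtoC (INR n) * z))%C))
      by (intros n; apply Cexp_add_nat).
    rewrite Csum_list_scal.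
    pose proof (geom a z) as Hgeo.
    assert (Hx : Cexp z <> RtoC 1) by (intros H; apply Hy, Cexp_one_pow, H).
    set (P := Csum_list lNR _) in *.
    set (S := Csum_list (seq 0 a) _) in *.
    set (x := Cexp z) in *. set (y := Cexp (RtoC (INR a) * z)) in *.
    assert (Hx' : (x - RtoC 1)%C <> RtoC 0).
    { intros H; apply Hx. transitivity ((x - RtoC 1) + RtoC 1)%C; [ring|]. rewrite H. ring. }
    assert (Hy' : (y - RtoC 1)%C <> RtoC 0).
    { intros H; apply Hy. transitivity ((y - RtoC 1) + RtoC 1)%C; [ring|]. rewrite H. ring. }
    assert (HS : S = ((y - RtoC 1) / (x - RtoC 1))%C) by (rewrite <- Hgeo; field; exact Hx').
    rewrite HS. field. split; assumption.
  - intros m Hm.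
    destruct m as [|m]; [lia|]. replace (S m - 1)%nat with m by lia.
    assert (HaR : INR a <> 0) by (apply not_0_INR; lia).
    rewrite (key_R as_ a Hpos Hg Ha lNR lN0 _ HNR HN0).
    rewrite (Rsum_list_ext lNR (fun n => bernoulli_poly (S m) (INR (n + a) / INR a))
       (fun n => bernoulli_poly (S m) (INR n / INR a) + (INR (S m) * (/ INR a) ^ m) * INR n ^ m)).
    2:{ intros n. replace (INR (n + a) / INR a) with (INR n / INR a + 1)
          by (rewrite plus_INR; field; exact HaR).
        pose proof (BP_shift m (INR n / INR a)). unfold Rdiv in *. rewrite Rpow_mult_distr in H. lra. }
    rewrite Rsum_list_plus, Rsum_list_scal.
    pose proof (raabe a Hapos (S m)) as HR. replace (S m - 1)%nat with m in HR by lia.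
    unfold rs in HR.
    assert (Hp : INR a ^ m * (/ INR a) ^ m = 1)
      by (rewrite <- Rpow_mult_distr, Rinv_r by exact HaR; apply pow1).
    set (T := Rsum_list (seq 0 a) _) in *.
    set (U := Rsum_list lNR (fun n => bernoulli_poly (S m) _)) in *.
    set (V := Rsum_list lNR (fun n => INR n ^ m)) in *.
    transitivity (INR a ^ m * T + INR (S m) * (INR a ^ m * (/ INR a) ^ m) * V - bernoulli (S m)).
    + rewrite Hp, HR by lia. ring.
    + ring.
Qed.
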